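(* Let $\mathbf u\in\{0,1\}^{\mathbb N}$ and $\sigma\in\{L,M,R\}^*$ with $\inf(\mathbf u)\ge\inf(\sigma(1\overline0))$ and $\sup(\mathbf u)\le\sup(\sigma(0\overline1))$. Then either $\mathbf u$ has a suffix equal to $\sigma(\mathbf v)$ for some $\mathbf v\in\{0,1\}^{\mathbb N}$, or $\mathbf u$ has a suffix equal to $\sigma'(\overline0)$ for some $\sigma'\in\{L,M,R\}^*M$ such that $\sigma=\sigma'\tau$ for some $\tau\in\{L,M,R\}^*$.
   Context: Infinite words over $\{0,1\}$ are ordered lexicographically; $\overline{w}$ denotes infinite repetition of $w$. For $\mathbf u=u_1u_2\cdots\in\{0,1\}^{\mathbb N}$, $\sup(\mathbf u)$ and $\inf(\mathbf u)$ are the lexicographic supremum and infimum of $\{u_ku_{k+1}\cdots:k\ge1\}$. Substitutions (monoid morphisms on words, extended letterwise to infinite words): $L:0\mapsto0,1\mapsto01$; $M:0\mapsto01,1\mapsto10$; $R:0\mapsto01,1\mapsto1$. $\{L,M,R\}^*$ is the monoid they generate under composition (including the identity), and $\{L,M,R\}^*M=\{\tau M:\tau\in\{L,M,R\}^*\}$. *)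

(* Defs.v *)
From mathcomp Require Import all_boot.
From Stdlib Require Import ClassicalEpsilon.
Set Implicit Arguments. Unset Strict Implicit. Unset Printing Implicit Defensive.

(* Letters: false = 0, true = 1.  Infinite words: nat -> bool (index 0 = u_1). *)
Definition word := nat -> bool.

Inductive gen := GL | GM | GR.

Definition img (g : gen) (b : bool) : seq bool :=
  match g, b with
  | GL, false => [:: false]        | GL, true => [:: false; true]
  | GM, false => [:: false; true]  | GM, true => [:: true; false]
  | GR, false => [:: false; true]  | GR, true => [:: true]
  end.

(* Image of an infinite word under a single (non-erasing) generator:
   letter n of g(u) is letter n of g(u_0) g(u_1) ... g(u_n) (which has length > n). *)
Definition gen_inf (g : gen) (u : word) : word :=
  fun n => nth false (flatten [seq img g (u i) | i <- iota 0 n.+1]) n.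

(* A list [g1; ...; gk] denotes the composition g1 o g2 o ... o gk. *)
Definition subst_inf (s : seq gen) (u : word) : word := foldr gen_inf u s.
Definition subst_fin (s : seq gen) (w : seq bool) : seq bool :=
  foldr (fun g w => flatten [seq img g b | b <- w]) w s.
Definition morph_eq (s t : seq gen) : Prop := forall w, subst_fin s w = subst_fin t w.

Definition lex_lt (u v : word) : Prop :=
  exists n, (forall i, i < n -> u i = v i) /\ u n = false /\ v n = true.
Definition lex_le (u v : word) : Prop := (forall i, u i = v i) \/ lex_lt u v.

Definition suffixes (u : word) : word -> Prop :=
  fun x => exists k, forall n, x n = u (k + n).

Definition is_sup (S : word -> Prop) (x : word) : Prop :=
  (forall y, S y -> lex_le y x) /\ (forall z, (forall y, S y -> lex_le y z) -> lex_le x z).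
Definition is_inf (S : word -> Prop) (x : word) : Prop :=
  (forall y, S y -> lex_le x y) /\ (forall z, (forall y, S y -> lex_le z y) -> lex_le z x).

Definition sup_word (u : word) : word :=
  epsilon (inhabits (fun _ => false)) (is_sup (suffixes u)).
Definition inf_word (u : word) : word :=
  epsilon (inhabits (fun _ => false)) (is_inf (suffixes u)).

Definition zero_bar : word := fun _ => false.
Definition one_zero_bar : word := fun n => n == 0.
Definition zero_one_bar : word := fun n => n != 0.

(* Main.v *)
Require Import Defs.
From mathcomp Require Import all_boot.
From Stdlib Require Import FunctionalExtensionality ClassicalEpsilon Classical Lia.
From mathcomp Require Import zify.
Set Implicit Arguments. Unset Strict Implicit. Unset Printing Implicit Defensive.

Definition sh (k : nat) (u : word) : word := fun n => u (k + n).
Definition app (p : seq bool) (w : word) : word :=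
  fun n => if n < size p then nth false p n else w (n - size p).

Lemma sh0 u : sh 0 u = u.
Proof. by apply: functional_extensionality. Qed.
Lemma sh_sh a b u : sh a (sh b u) = sh (b + a) u.
Proof. apply: functional_extensionality => n; by rewrite /sh addnA. Qed.
Lemma sh_app p w : sh (size p) (app p w) = w.
Proof. apply: functional_extensionality => n; rewrite /sh /app.
by rewrite ltnNge leq_addr /= addKn. Qed.
Lemma app_cons a p w : app (a :: p) w = app [:: a] (app p w).
Proof. apply: functional_extensionality => n; rewrite /app.
case: n => [|n] //=. by rewrite subn1. Qed.
Lemma sh1_app_cons a p w : sh 1 (app (a :: p) w) = app p w.
Proof. by rewrite app_cons -[1]/(size [:: a]) sh_app. Qed.
Lemma app_nil w : app [::] w = w.
Proof. apply: functional_extensionality => n; by rewrite /app subn0. Qed.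
Lemma eta_w w : w = app [:: w 0] (sh 1 w).
Proof. apply: functional_extensionality => n; rewrite /app /sh.
case: n => [|n] //=. by rewrite subn1 add1n. Qed.

Lemma size_img g b : 0 < size (img g b).
Proof. by case: g; case: b. Qed.
Lemma size_img2 g b : size (img g b) <= 2.
Proof. by case: g; case: b. Qed.

Lemma nth_flatten_pref (f : nat -> seq bool) a i :
  (forall j, 0 < size (f j)) -> i < a ->
  nth false (flatten [seq f j | j <- iota 0 a]) i =
  nth false (flatten [seq f j | j <- iota 0 i.+1]) i.
Proof.
move=> Hf Hi.
have -> : a = i.+1 + (a - i.+1) by rewrite subnKC.
rewrite iotaD map_cat flatten_cat nth_cat.
suff -> : i < size (flatten [seq f j | j <- iota 0 i.+1]) by [].
rewrite size_flatten /shape -map_comp.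
have : forall m k, m <= sumn [seq (size \o f) j | j <- iota k m].
  elim=> [|m IH] k //=. rewrite -add1n. apply: leq_add; [exact: Hf|exact: IH].
by apply.
Qed.

Lemma nth_flatten_shift (f : nat -> seq bool) n :
  nth false (flatten [seq f j | j <- iota 1 n]) =
  nth false (flatten [seq f (1 + j) | j <- iota 0 n]).
Proof. by rewrite -(addn0 1) iotaDl -map_comp. Qed.

Lemma G_unf g w : gen_inf g w = app (img g (w 0)) (gen_inf g (sh 1 w)).
Proof.
apply: functional_extensionality => n; rewrite /gen_inf /app.
rewrite /= nth_cat.
case: ifP => // Hn.
set s := size (img g (w 0)).
have s1 : 0 < s by apply: size_img.
rewrite nth_flatten_shift.
have Hns : s <= n by rewrite leqNgt Hn.
case: n Hn Hns => [|n] Hn Hns; first by rewrite leqNgt s1 in Hns.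
rewrite (@nth_flatten_pref (fun j => img g (w (1 + j))) n.+1 (n.+1 - s)).
- by rewrite /sh.
- by move=> j; apply: size_img.
- rewrite ltn_subLR //; lia.
Qed.

Definition lexp (n : nat) (y z : word) : Prop :=
  forall i, i < n -> (forall h, h < i -> y h = z h) -> y i -> z i.

Lemma lexp_le m n y z : m <= n -> lexp n y z -> lexp m y z.
Proof. move=> Hmn H i Hi; apply: H; exact: leq_trans Hi Hmn. Qed.
Lemma lexp0 n y z : lexp n.+1 y z -> y 0 -> z 0.
Proof. move=> H; apply: H => // h. Qed.
Lemma lexp_lt n y z : y 0 = false -> z 0 = true -> lexp n y z.
Proof. move=> Hy Hz [|i] _ H; first by rewrite Hy.
by move: (H 0 (ltn0Sn _)); rewrite Hy Hz. Qed.
Lemma lexp_cons n a y z : lexp n.+1 (app [:: a] y) (app [:: a] z) -> lexp n y z.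
Proof. move=> H i Hi Hh Hy.
have := H i.+1 Hi. rewrite /app /= !subn1 /=. apply=> //.
case=> [|h] //= Hh'. by rewrite subn1 /= Hh. Qed.
Lemma lexp_cons' n a y z : lexp n y z -> lexp n.+1 (app [:: a] y) (app [:: a] z).
Proof. move=> H [|i] Hi Hh //=. rewrite /app /= !subn1 /=. apply: H => // h Hh'.
have := Hh h.+1 Hh'. by rewrite /app /= subn1. Qed.
Lemma lexp_app p n y z : lexp (size p + n) (app p y) (app p z) -> lexp n y z.
Proof. elim: p => [|a p IH] /=; first by rewrite !app_nil.
rewrite (app_cons a p y) (app_cons a p z) addSn. move/lexp_cons. exact: IH. Qed.
Lemma lexp_app' p n y z : lexp n y z -> lexp (size p + n) (app p y) (app p z).
Proof. elim: p => [|a p IH] /=; first by rewrite !app_nil.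
rewrite (app_cons a p y) (app_cons a p z) addSn => H. apply: lexp_cons'. exact: IH. Qed.
Lemma lexp_refl n y : lexp n y y.
Proof. by move=> i. Qed.
Lemma lexp_ext n y y' z z' : (forall i, i < n -> y i = y' i) -> (forall i, i < n -> z i = z' i) ->
  lexp n y z -> lexp n y' z'.
Proof. move=> Ey Ez H i Hi Hh. rewrite -Ey // -Ez //. apply: H => // h Hhi.
have Hhn : h < n by apply: ltn_trans Hhi Hi.
by rewrite Ey // Ez // Hh. Qed.
Lemma lexp_antisym n y z : lexp n y z -> lexp n z y -> forall i, i < n -> y i = z i.
Proof. move=> H1 H2. elim/ltn_ind => i IH Hi.
have Hh : forall h, h < i -> y h = z h.
  move=> h Hhi; apply: IH => //; exact: ltn_trans Hhi Hi.
apply/idP/idP; [exact: H1|apply: H2 => // h /Hh ->//]. Qed.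
Lemma lexp_trans n x y z : lexp n x y -> lexp n y z -> lexp n x z.
Proof.
move=> H1 H2 i Hi Hh Hx.
case: (boolP [exists j : 'I_i, x j != y j]) => [/existsP [j0 Hj0] | Hno].
- have Hex : exists j, (j < i) && (x j != y j) by exists j0; rewrite ltn_ord Hj0.
  case: (ex_minnP Hex) => j /andP [Hji Hd] Hmin.
  have Hlt : forall h, h < j -> x h = y h.
    move=> h Hhj. apply/eqP. apply: contraT => Hne.
    have := Hmin h. rewrite Hne (ltn_trans Hhj Hji) => /(_ isT). by rewrite leqNgt Hhj.
  have Hjn : j < n by apply: ltn_trans Hji Hi.
  have Hxz : forall h, h < j -> y h = z h.
    move=> h Hhj. rewrite -Hlt // Hh //. exact: ltn_trans Hhj Hji.
  case Exj : (x j); case Eyj : (y j); rewrite Exj Eyj in Hd => //.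
  + have := H1 j Hjn Hlt. by rewrite Exj Eyj => /(_ isT).
  + (* x j = false, y j = true: then y j -> z j, so z j = true, but x j = z j *)
    have Hz := H2 j Hjn Hxz Eyj. have Hxzj := Hh j Hji. rewrite Exj in Hxzj. by rewrite -Hxzj in Hz.
- have Hxy : forall h, h < i -> x h = y h.
    move=> h Hhi. move/existsPn: Hno => /(_ (Ordinal Hhi)). by rewrite negbK => /eqP.
  apply: H2 => //.
  + move=> h Hhi. by rewrite -Hxy // Hh.
  + exact: H1 Hi Hxy Hx.
Qed.
Lemma lexpS n y z : lexp n.+1 y z <-> lexp n y z /\ ((forall h, h < n -> y h = z h) -> y n -> z n).
Proof. split.
- move=> H; split; [exact: lexp_le H|]. exact: H.
- move=> [H1 H2] i Hi. rewrite ltnS leq_eqVlt in Hi. case/orP: Hi => [/eqP ->|Hi]; first exact: H2.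
  exact: H1. Qed.

Lemma sh_0 k w : sh k w 0 = w k.
Proof. by rewrite /sh addn0. Qed.

Lemma G_suf g w k : exists p, sh p (gen_inf g w) = gen_inf g (sh k w).
Proof.
elim: k => [|k [p Hp]]; first by exists 0; rewrite !sh0.
exists (p + size (img g (sh k w 0))).
by rewrite -sh_sh Hp {1}G_unf sh_app sh_sh addn1.
Qed.

Lemma G_dec g Z j : exists j' i, i < size (img g (Z j')) /\
  sh j (gen_inf g Z) = app (drop i (img g (Z j'))) (gen_inf g (sh j'.+1 Z)).
Proof.
elim: j => [|j [j' [i [Hi E]]]].
- exists 0, 0; split; first exact: size_img. by rewrite sh0 drop0 {1}G_unf.
- have -> : sh j.+1 (gen_inf g Z) = sh 1 (sh j (gen_inf g Z)) by rewrite sh_sh addn1.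
  rewrite E.
  have Hd : drop i (img g (Z j')) = nth false (img g (Z j')) i :: drop i.+1 (img g (Z j')).
    by rewrite (drop_nth false Hi).
  rewrite Hd sh1_app_cons.
  case: (ltnP i.+1 (size (img g (Z j')))) => Hi'.
  + by exists j', i.+1.
  + have -> : drop i.+1 (img g (Z j')) = [::] by apply: drop_oversize.
    exists j'.+1, 0; split; first exact: size_img.
    by rewrite app_nil drop0 {1}G_unf sh_0 sh_sh addn1.
Qed.

Lemma parse g (u : word) (pos : nat -> nat) (w : word) :
 (forall k, pos k.+1 = pos k + size (img g (w k))) ->
 (forall k i, i < size (img g (w k)) -> u (pos k + i) = nth false (img g (w k)) i) ->
 forall k, sh (pos k) u = gen_inf g (sh k w).
Proof.
move=> Hpos Hu.
suff H : forall n k, u (pos k + n) = gen_inf g (sh k w) n.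
  by move=> k; apply: functional_extensionality => n; apply: H.
elim/ltn_ind => n IH k.
rewrite G_unf /app sh_0. case: ifP => Hn; first exact: Hu.
have s1 := size_img g (w k).
have Hle : size (img g (w k)) <= n by rewrite leqNgt Hn.
rewrite sh_sh addn1 -IH; last by rewrite ltn_subLR // -{1}(add0n n) ltn_add2r.
by rewrite Hpos -addnA subnKC.
Qed.

Lemma G_head g w : gen_inf g w 0 = nth false (img g (w 0)) 0.
Proof. by rewrite G_unf /app size_img. Qed.
Lemma L_head w : gen_inf GL w 0 = false.
Proof. by rewrite G_head; case: (w 0). Qed.

Lemma lexp_morph g n N y z : 2 * n <= N ->
  lexp N (gen_inf g y) (gen_inf g z) -> lexp n y z.
Proof.
elim: n N y z => [|n IH] N y z HN H; first by move=> i.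
rewrite (eta_w y) (eta_w z). 
case Ey : (y 0); case Ez : (z 0).
- apply: lexp_cons'. apply: (IH (N - size (img g true))).
  + have := size_img2 g true. lia.
  + apply: (@lexp_app (img g true)).
    rewrite (G_unf g y) (G_unf g z) Ey Ez in H. apply: lexp_le H.
    have := size_img2 g true. lia.
- exfalso. rewrite (G_unf g y) (G_unf g z) Ey Ez in H.
  have HN2 : 2 <= N by lia.
  case: g IH H => IH H.
  + have := H 1 HN2. rewrite /app /=. 
    move=> HH. rewrite subnn L_head in HH. have : false by apply: HH => // [[|h]]. done.
  + have := H 0 (ltn_trans (ltnSn 0) HN2). rewrite /app /= => HH. have : false by apply: HH. done.
  + have := H 0 (ltn_trans (ltnSn 0) HN2). rewrite /app /= => HH. have : false by apply: HH. done.
- by apply: lexp_lt.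
- apply: lexp_cons'. apply: (IH (N - size (img g false))).
  + have := size_img2 g false. lia.
  + apply: (@lexp_app (img g false)).
    rewrite (G_unf g y) (G_unf g z) Ey Ez in H. apply: lexp_le H.
    have := size_img2 g false. lia.
Qed.

Definition Lo (A u : word) := forall k n, exists j, lexp n (sh j A) (sh k u).
Definition Hi (A u : word) := forall k n, exists j, lexp n (sh k u) (sh j A).

Lemma lexle_lexp n y z : lex_le y z -> lexp n y z.
Proof.
case=> [E|[m [Hm [Hy Hz]]]] i Hi Hh Hyi; first by rewrite -E.
case: (ltngtP i m) => Him.
- by rewrite -Hm.
- have := Hh m Him. by rewrite Hy Hz.
- by move: Hyi; rewrite Him Hy.
Qed.

Lemma lexp_all_le y z : (forall n, lexp n y z) -> lex_le y z.
Proof.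
move=> H. case: (classic (exists i, y i != z i)) => [Hex|Hno].
- right. case: (ex_minnP Hex) => d Hd Hmin. exists d.
  have Hlt : forall i, i < d -> y i = z i.
    move=> i Hi. apply/eqP. apply: contraT => Hne. have := Hmin i Hne. by rewrite leqNgt Hi.
  split=> //.
  have := H d.+1 d (ltnSn d) Hlt.
  by case: (y d) Hd; case: (z d) => //= _ /(_ isT).
- left => i. apply/eqP. apply: contraT => Hne. case: Hno. by exists i.
Qed.

Lemma suf_sh A y : suffixes A y -> exists k, y = sh k A.
Proof. case=> k Hk. exists k. by apply: functional_extensionality. Qed.
Lemma sh_suf A k : suffixes A (sh k A).
Proof. by exists k. Qed.

Lemma minpre A n : exists j0, forall j, lexp n (sh j0 A) (sh j A).
Proof.
elim: n => [|n [j0 Hj0]]; first by exists 0 => j i.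
case: (classic (exists j, (forall h, h < n -> sh j A h = sh j0 A h) /\ sh j A n = false)).
- case=> j1 [Hj1 Hn]. exists j1 => j. apply/lexpS; split.
  + apply: lexp_ext (Hj0 j) => // i Hi. by rewrite Hj1.
  + by rewrite Hn.
- move=> Hno. exists j0 => j. apply/lexpS; split; first exact: Hj0.
  move=> Hh H0. apply: contraT => Hj. case: Hno. exists j; split.
  + by move=> h Hhn; rewrite Hh.
  + by apply/negbTE.
Qed.

Lemma maxpre A n : exists j0, forall j, lexp n (sh j A) (sh j0 A).
Proof.
elim: n => [|n [j0 Hj0]]; first by exists 0 => j i.
case: (classic (exists j, (forall h, h < n -> sh j A h = sh j0 A h) /\ sh j A n = true)).
- case=> j1 [Hj1 Hn]. exists j1 => j. apply/lexpS; split.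
  + apply: lexp_ext (Hj0 j) => // i Hi. by rewrite Hj1.
  + by rewrite Hn.
- move=> Hno. exists j0 => j. apply/lexpS; split; first exact: Hj0.
  move=> Hh H0. apply: contraT => Hj. case: Hno. exists j; split.
  + by move=> h Hhn; rewrite -Hh.
  + by [].
Qed.

Definition padlo (a : word) n : word := fun i => if i < n then a i else false.
Definition padhi (a : word) n : word := fun i => if i < n then a i else true.

Lemma padlo_le a n y : lexp n a y -> lex_le (padlo a n) y.
Proof.
move=> H. apply: lexp_all_le => m i Hi Hh. rewrite /padlo. case: ifP => // Hin Ha.
apply: H => // h Hhi. have := Hh h Hhi. by rewrite /padlo (ltn_trans Hhi Hin).
Qed.
Lemma padhi_le a n y : lexp n y a -> lex_le y (padhi a n).
Proof.
move=> H. apply: lexp_all_le => m i Hi Hh. rewrite /padhi. case: ifP => // Hin Ha.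
apply: H => // h Hhi. have := Hh h Hhi. by rewrite /padhi (ltn_trans Hhi Hin).
Qed.

Lemma inf_exists A : exists m, is_inf (suffixes A) m.
Proof.
pose J n := proj1_sig (constructive_indefinite_description _ (minpre A n)).
have HJ : forall n j, lexp n (sh (J n) A) (sh j A).
  move=> n; exact: (proj2_sig (constructive_indefinite_description _ (minpre A n))).
pose m i := sh (J i.+1) A i.
have Ag : forall n i, i < n -> m i = sh (J n) A i.
  move=> n i Hi. apply: (@lexp_antisym i.+1 (sh (J i.+1) A) (sh (J n) A)); [exact: HJ| |exact: ltnSn].
  apply: lexp_le (HJ n _) => //.
exists m; split.
- move=> y /suf_sh [k ->]. apply: lexp_all_le => n.
  apply: lexp_ext (HJ n k) => // i Hi. by rewrite (Ag n).
- move=> z Hz. apply: lexp_all_le => n.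
  have HH := lexle_lexp (n:=n) (Hz _ (sh_suf A (J n))). apply: lexp_ext HH => // i Hi. by rewrite (Ag n).
Qed.

Lemma sup_exists A : exists m, is_sup (suffixes A) m.
Proof.
pose J n := proj1_sig (constructive_indefinite_description _ (maxpre A n)).
have HJ : forall n j, lexp n (sh j A) (sh (J n) A).
  move=> n; exact: (proj2_sig (constructive_indefinite_description _ (maxpre A n))).
pose m i := sh (J i.+1) A i.
have Ag : forall n i, i < n -> m i = sh (J n) A i.
  move=> n i Hi. apply: (@lexp_antisym i.+1 (sh (J i.+1) A) (sh (J n) A)); [|exact: HJ|exact: ltnSn].
  apply: lexp_le (HJ n _) => //.
exists m; split.
- move=> y /suf_sh [k ->]. apply: lexp_all_le => n.
  apply: lexp_ext (HJ n k) => // i Hi. by rewrite (Ag n).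
- move=> z Hz. apply: lexp_all_le => n.
  apply: lexp_ext (lexle_lexp (n:=n) (Hz _ (sh_suf A (J n)))) => // i Hi. by rewrite (Ag n).
Qed.

Lemma inf_attain A m n z : is_inf (suffixes A) m -> lexp n m z -> exists j, lexp n (sh j A) z.
Proof.
move=> [H1 H2] Hmz. case: (minpre A n) => j0 Hj0. exists j0.
have Hw : lex_le (padlo (sh j0 A) n) m.
  apply: H2 => y /suf_sh [k ->]. exact: padlo_le.
have := lexp_trans (lexle_lexp (n:=n) Hw) Hmz.
apply: lexp_ext => // i Hi. by rewrite /padlo Hi.
Qed.

Lemma sup_attain A m n z : is_sup (suffixes A) m -> lexp n z m -> exists j, lexp n z (sh j A).
Proof.
move=> [H1 H2] Hmz. case: (maxpre A n) => j0 Hj0. exists j0.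
have Hw : lex_le m (padhi (sh j0 A) n).
  apply: H2 => y /suf_sh [k ->]. exact: padhi_le.
have := lexp_trans Hmz (lexle_lexp (n:=n) Hw).
apply: lexp_ext => // i Hi. by rewrite /padhi Hi.
Qed.

Lemma inf_spec u : is_inf (suffixes u) (inf_word u).
Proof. exact: epsilon_spec (inf_exists u). Qed.
Lemma sup_spec u : is_sup (suffixes u) (sup_word u).
Proof. exact: epsilon_spec (sup_exists u). Qed.

Lemma Lo_of A u : lex_le (inf_word A) (inf_word u) -> Lo A u.
Proof.
move=> H k n. apply: (inf_attain (n:=n) (inf_spec A)).
apply: lexp_trans (lexle_lexp (n:=n) H) _.
apply: lexle_lexp. exact: (proj1 (inf_spec u) _ (sh_suf u k)).
Qed.
Lemma Hi_of A u : lex_le (sup_word u) (sup_word A) -> Hi A u.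
Proof.
move=> H k n. apply: (sup_attain (n:=n) (sup_spec A)).
apply: lexp_trans _ (lexle_lexp (n:=n) H).
apply: lexle_lexp. exact: (proj1 (sup_spec u) _ (sh_suf u k)).
Qed.

Lemma G_unf_sh g w k : gen_inf g (sh k w) = app (img g (w k)) (gen_inf g (sh k.+1 w)).
Proof. by rewrite G_unf sh_0 sh_sh addn1. Qed.
Lemma sh_eta k w : sh k w = app [:: w k] (sh k.+1 w).
Proof. by rewrite {1}(eta_w (sh k w)) sh_0 sh_sh addn1. Qed.
Lemma sh1_sh p u : sh 1 (sh p u) = sh p.+1 u.
Proof. by rewrite sh_sh addn1. Qed.
Lemma Lo_sh A u r : Lo A u -> Lo A (sh r u).
Proof. move=> H k n. rewrite sh_sh. exact: H. Qed.
Lemma Hi_sh A u r : Hi A u -> Hi A (sh r u).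
Proof. move=> H k n. rewrite sh_sh. exact: H. Qed.
Lemma lexp0N n y z : lexp n y z -> 0 < n -> y 0 -> z 0.
Proof. move=> H Hn Hy. by apply: H. Qed.
Lemma app1_0 a w : app [:: a] w 0 = a.
Proof. by []. Qed.
Lemma lexp0' n a b y z : lexp n.+1 (app [:: a] y) (app [:: b] z) -> a -> b.
Proof. by move/lexp0. Qed.

Fixpoint posL (u : word) (r k : nat) : nat :=
  if k is k'.+1 then posL u r k' + (if u (posL u r k').+1 then 2 else 1) else r.

Lemma parse_L X u : Hi (gen_inf GL X) u -> exists r w, sh r u = gen_inf GL w.
Proof.
move=> H.
have no11 : forall p, u p -> u p.+1 -> False.
  move=> p H0 H1. case: (H p 2) => j Hj.
  case: (G_dec GL X j) => j' [i [Hi E]]. rewrite E in Hj; clear E.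
  have s0 : sh p u 0 by rewrite sh_0.
  have s1 : sh p u 1 by rewrite /sh addn1.
  have t0 := lexp0 Hj s0.
  case: (X j') Hi Hj t0 => /= Hi Hj t0.
  - case: i Hi Hj t0 => [|[|i]] // _ Hj t0.
    rewrite /= in Hj t0. have := Hj 1 (ltnSn 1).
    rewrite /app /= subnn L_head. move=> HH. have : false; last by [].
    apply: HH => //. case=> // _. 
  - case: i Hi Hj t0 => [|i] // _ Hj t0.
set r := if u 0 then 1 else 0.
pose w k := u (posL u r k).+1.
have Inv : forall k, u (posL u r k) = false.
  elim=> [|k IH] /=.
  - rewrite /r. case E: (u 0); last by [].
    by case E1: (u 1) => //; case: (no11 0 E E1).
  - case E: (u (posL u r k).+1).
    + rewrite addn2. by case E2: (u (posL u r k).+2) => //; case: (no11 _ E E2).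
    + by rewrite addn1.
exists r, w. rewrite -(sh0 w).
have -> : r = posL u r 0 by [].
apply: (@parse GL u (posL u r) w).
- by move=> k /=; rewrite /w; case: (u (posL u r k).+1).
- move=> k i. rewrite /w. case E: (u (posL u r k).+1) => /=.
  + case: i => [|[|i]] //= _; first by rewrite addn0 Inv.
    by rewrite addn1 E.
  + case: i => [|i] //= _. by rewrite addn0 Inv.
Qed.

Lemma bounds_L (X Y w : word) : (exists j, X j) -> Lo (gen_inf GL Y) (gen_inf GL w) ->
  Hi (gen_inf GL X) (gen_inf GL w) -> Lo Y w /\ Hi X w.
Proof.
move=> [j0 Hj0] HL HH; split.
- move=> k n. case: n => [|n]; first by exists 0 => i.
  case: (G_suf GL w k) => p Hp. case: (HL p (2 * n.+1)) => j Hj. rewrite Hp in Hj.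
  case: (G_dec GL Y j) => j' [i [Hi E]]. rewrite E in Hj; clear E.
  case: i Hi Hj => [|i] Hi Hj.
  + exists j'. apply: (@lexp_morph GL n.+1 (2 * n.+1)) => //. by rewrite G_unf_sh -(drop0 (img _ _)).
  + exfalso. case: (Y j') Hi Hj => //=. case: i => //= _ Hj.
    have := lexp0N Hj (ltac:(lia)) isT. by rewrite L_head.
- move=> k n. case Ewk: (w k).
  + case: n => [|n]; first by exists 0 => i.
    case: (G_suf GL w k) => p Hp.
    have Hq : sh p.+1 (gen_inf GL w) = app [:: true] (gen_inf GL (sh k.+1 w)).
      by rewrite -sh1_sh Hp G_unf_sh Ewk sh1_app_cons.
    case: (HH p.+1 (2 * n).+1) => j Hj. rewrite Hq in Hj.
    case: (G_dec GL X j) => j' [i [Hi E]]. rewrite E in Hj; clear E.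
    case: i Hi Hj => [|i] Hi Hj.
    * exfalso. have := lexp0 Hj isT. rewrite drop0 /app size_img. by case: (X j').
    * case EX: (X j') Hi Hj => //=. case: i => //= _ Hj.
      exists j'. rewrite (sh_eta k w) (sh_eta j' X) Ewk EX. apply: lexp_cons'.
      apply: (@lexp_morph GL n (2 * n)) => //. exact: lexp_cons Hj.
  + exists j0. apply: lexp_lt; by rewrite sh_0.
Qed.

Fixpoint posR (u : word) (k : nat) : nat :=
  if k is k'.+1 then posR u k' + (if u (posR u k') then 1 else 2) else 0.

Lemma R_head w : gen_inf GR w 0 = w 0.
Proof. by rewrite G_head; case: (w 0). Qed.

Lemma parse_R Y u : Lo (gen_inf GR Y) u -> exists w, u = gen_inf GR w.
Proof.
move=> H.
have no00 : forall p, u p = false -> u p.+1 = false -> False.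
  move=> p H0 H1. case: (H p 2) => j Hj.
  case: (G_dec GR Y j) => j' [i [Hi E]]. rewrite E in Hj; clear E.
  have s0 : sh p u 0 = false by rewrite sh_0.
  have s1 : sh p u 1 = false by rewrite /sh addn1.
  set a := app _ _ in Hj.
  have a0 : a 0 = false.
    apply: negbTE; apply/negP => a0. have := lexp0N Hj isT a0. by rewrite s0.
  have a1 : a 1 = false.
    apply: negbTE; apply/negP => a1. have := Hj 1 (ltnSn 1).
    rewrite s1. move=> HH. have : false; last by []. apply: HH => //.
    case=> // _. by rewrite a0 s0.
  move: a0 a1; subst a. clear Hj.
  case: (Y j') Hi => /=.
  - by case: i.
  - case: i => [|[|i]] //= _.
pose w k := u (posR u k).
exists w. rewrite -(sh0 u) -(sh0 w).
have -> : 0 = posR u 0 by [].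
apply: (@parse GR u (posR u) w).
- by move=> k /=; rewrite /w; case: (u (posR u k)).
- move=> k i. rewrite /w. case E: (u (posR u k)) => /=.
  + case: i => [|i] //= _. by rewrite addn0 E.
  + case: i => [|[|i]] //= _; first by rewrite addn0 E.
    rewrite addn1. by case E2: (u (posR u k).+1) => //; case: (no00 _ E E2).
Qed.

Lemma bounds_R (X Y w : word) : Lo (gen_inf GR Y) (gen_inf GR w) ->
  Hi (gen_inf GR X) (gen_inf GR w) -> Lo Y w /\ Hi X (sh 1 w).
Proof.
move=> HL HH; split.
- move=> k n. case: n => [|n]; first by exists 0 => i.
  case: (G_suf GR w k) => p Hp. case: (HL p (2 * n.+1)) => j Hj. rewrite Hp in Hj.
  case: (G_dec GR Y j) => j' [i [Hi E]]. rewrite E in Hj; clear E.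
  case: i Hi Hj => [|i] Hi Hj.
  + exists j'. apply: (@lexp_morph GR n.+1 (2 * n.+1)) => //. by rewrite G_unf_sh -(drop0 (img _ _)).
  + case EY: (Y j') Hi Hj => //=. case: i => //= _ Hj.
    have := lexp0N Hj (ltac:(lia)) isT. rewrite R_head sh_0 => Hw.
    exists j'. apply: lexp_lt; by rewrite sh_0.
- move=> k n. rewrite sh_sh add1n.
  have [q Hq] : exists q, sh q (gen_inf GR w) = app [:: true] (gen_inf GR (sh k.+1 w)).
    case: (G_suf GR w k) => p Hp. rewrite G_unf_sh in Hp. case Ewk: (w k) Hp => Hp.
    + by exists p.
    + exists p.+1. by rewrite -sh1_sh Hp sh1_app_cons.
  case: (HH q (2 * n).+1) => j Hj. rewrite Hq in Hj.
  case: (G_dec GR X j) => j' [i [Hi E]]. rewrite E in Hj; clear E.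
  case EX: (X j') Hi Hj => Hi Hj.
  + case: i Hi Hj => [|i] //= _ Hj. exists j'.+1.
    apply: (@lexp_morph GR n (2 * n)) => //. exact: lexp_cons Hj.
  + case: i Hi Hj => [|[|i]] //= _ Hj.
    * have := lexp0N Hj isT isT. by [].
    * exists j'.+1. apply: (@lexp_morph GR n (2 * n)) => //. exact: lexp_cons Hj.
Qed.

Definition one_bar : word := fun _ => true.
Definition M0 := gen_inf GM zero_bar.
Definition M1 := gen_inf GM one_bar.
Lemma M0E : M0 = app [:: false; true] M0.
Proof. by rewrite /M0 {1}G_unf. Qed.
Lemma M1E : M1 = app [:: true; false] M1.
Proof. by rewrite /M1 {1}G_unf. Qed.
Lemma M0E' : M0 = app [:: false] (app [:: true] M0).
Proof. by rewrite {1}M0E app_cons. Qed.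
Lemma M1E' : M1 = app [:: true] (app [:: false] M1).
Proof. by rewrite {1}M1E app_cons. Qed.

Lemma Mlow n z : lexp n M0 (gen_inf GM z).
Proof.
elim/ltn_ind: n z => n IH z. case: n IH => [|n] IH; first by move=> i.
rewrite G_unf. case E: (z 0).
- apply: lexp_lt; [by rewrite M0E|by []].
- rewrite M0E. apply: (@lexp_le _ (size [:: false; true] + (n.+1 - 2))); first by rewrite /=; lia.
  apply: lexp_app'. apply: IH. lia.
Qed.
Lemma Mhigh n z : lexp n (gen_inf GM z) M1.
Proof.
elim/ltn_ind: n z => n IH z. case: n IH => [|n] IH; first by move=> i.
rewrite G_unf. case E: (z 0).
- rewrite M1E. apply: (@lexp_le _ (size [:: true; false] + (n.+1 - 2))); first by rewrite /=; lia.
  apply: lexp_app'. apply: IH. lia.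
- apply: lexp_lt; [by []|by rewrite M1E].
Qed.

Lemma drop1M b : drop 1 (img GM b) = [:: ~~ b].
Proof. by case: b. Qed.

Lemma parse_M X Y u : Lo (gen_inf GM Y) u -> Hi (gen_inf GM X) u ->
  exists r w, sh r u = gen_inf GM w.
Proof.
move=> HL HH.
have lb : forall k n, lexp n (app [:: false] M0) (sh k u).
  move=> k n. case: (HL k n) => j Hj. apply: lexp_trans Hj.
  case: (G_dec GM Y j) => j' [i [Hi E]]. rewrite E; clear E.
  case: i Hi => [|[|i]] //; last by case: (Y j').
  - move=> _. rewrite drop0 -G_unf_sh. apply: (@lexp_trans n _ M0); last exact: Mlow.
    apply: (@lexp_le _ n.+1) => //. rewrite {2}M0E'. apply: lexp_cons'. exact: lexp_lt.
  - move=> _. rewrite drop1M. case: (Y j') => /=.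
    + apply: (@lexp_le _ n.+1) => //. apply: lexp_cons'. exact: Mlow.
    + exact: lexp_lt.
have ub : forall k n, lexp n (sh k u) (app [:: true] M1).
  move=> k n. case: (HH k n) => j Hj. apply: lexp_trans Hj _.
  case: (G_dec GM X j) => j' [i [Hi E]]. rewrite E; clear E.
  case: i Hi => [|[|i]] //; last by case: (X j').
  - move=> _. rewrite drop0 -G_unf_sh. apply: (@lexp_trans n _ M1); first exact: Mhigh.
    apply: (@lexp_le _ n.+1) => //. rewrite {1}M1E'. apply: lexp_cons'. exact: lexp_lt.
  - move=> _. rewrite drop1M. case: (X j') => /=.
    + exact: lexp_lt.
    + apply: (@lexp_le _ n.+1) => //. apply: lexp_cons'. exact: Mhigh.
pose I r := (u r = false -> forall n, lexp n M0 (sh r u)) /\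
            (u r = true -> forall n, lexp n (sh r u) M1).
have step : forall r, I r -> u r.+1 = ~~ u r /\ I r.+2.
  move=> r [I0 I1]. have Er : sh r u = app [:: u r] (app [:: u r.+1] (sh r.+2 u)).
    by rewrite sh_eta (sh_eta r.+1).
  case E: (u r).
  - have H := I1 E. have Hr1 : u r.+1 = false.
      apply: negbTE; apply/negP => E1.
      have := H 2. rewrite Er E M1E' => /lexp_cons /lexp0. by rewrite E1 => /(_ isT).
    split; first by rewrite Hr1.
    split=> E2 n.
    + have := lb r.+1 n.+1. rewrite sh_eta Hr1. exact: lexp_cons.
    + have := H n.+2. rewrite Er E Hr1 {1}M1E'. by move/lexp_cons/lexp_cons.
  - have H := I0 E. have Hr1 : u r.+1 = true.
      apply: contraT => /negbTE E1.
      have := H 2. rewrite Er E M0E' => /lexp_cons /lexp0. by rewrite E1 => /(_ isT).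
    split; first by rewrite Hr1.
    split=> E2 n.
    + have := H n.+2. rewrite Er E Hr1 {1}M0E'. by move/lexp_cons/lexp_cons.
    + have := ub r.+1 n.+1. rewrite sh_eta Hr1. exact: lexp_cons.
have [r Hr] : exists r, forall k, u (r + 2 * k).+1 = ~~ u (r + 2 * k).
  case: (classic (exists p, u p = u p.+1)) => [[p Hp]|Hno].
  - exists p.+1.
    have I0 : I p.+1.
      split=> E n.
      + have := lb p n.+1. rewrite sh_eta Hp E. exact: lexp_cons.
      + have := ub p n.+1. rewrite sh_eta Hp E. exact: lexp_cons.
    have : forall k, I (p.+1 + 2 * k) /\ u (p.+1 + 2 * k).+1 = ~~ u (p.+1 + 2 * k).
      elim=> [|k [IHk _]]; first by rewrite addn0; split; [|case: (step _ I0)].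
      have [_ Ik] := step _ IHk.
      have -> : p.+1 + 2 * k.+1 = (p.+1 + 2 * k).+2 by lia.
      split=> //. by case: (step _ Ik).
    move=> H k; by case: (H k).
  - exists 0 => k. case E1: (u (0 + 2 * k)); case E2: (u (0 + 2 * k).+1) => //.
    + case: Hno. exists (0 + 2 * k). by rewrite E1 E2.
    + case: Hno. exists (0 + 2 * k). by rewrite E1 E2.
pose w k := u (r + 2 * k).
exists r, w. rewrite -(sh0 w).
have -> : r = (fun k => r + 2 * k) 0 by rewrite /= muln0 addn0.
apply: (@parse GM u (fun k => r + 2 * k) w).
- move=> k /=. rewrite /w. case: (u _) => /=; lia.
- move=> k i. rewrite /w. case E: (u (r + 2 * k)) => /=.
  + case: i => [|[|i]] //= _; first by rewrite addn0 E.
    by rewrite addn1 Hr E.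
  + case: i => [|[|i]] //= _; first by rewrite addn0 E.
    by rewrite addn1 Hr E.
Qed.

Lemma bounds_M (X Y w : word) : (exists j, X j) -> (exists j, Y j = false) ->
  Lo (gen_inf GM Y) (gen_inf GM w) -> Hi (gen_inf GM X) (gen_inf GM w) ->
 (forall k, (exists i, i <= k /\ w i = true) -> forall n, exists j, lexp n (sh j Y) (sh k w)) /\
 (forall k, (exists i, i <= k /\ w i = false) -> forall n, exists j, lexp n (sh k w) (sh j X)).
Proof.
move=> [j1 Hj1] [j0 Hj0] HL HH; split.
- have common : forall k, w k = true -> forall n, exists j, lexp n (sh j Y) (sh k w).
    move=> k Hk n. exists j0. apply: lexp_lt; by rewrite sh_0.
  elim=> [|k IH] [i [Hik Hi]].
  + move: Hik; rewrite leqn0 => /eqP Ei. apply: common. by rewrite -Ei.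
  + case Ek1: (w k.+1); first exact: common.
    move=> n. case Ek: (w k).
    * case: (G_suf GM w k) => p Hp.
      have Hq : sh p.+1 (gen_inf GM w) = app [:: false] (gen_inf GM (sh k.+1 w)).
        by rewrite -sh1_sh Hp G_unf_sh Ek sh1_app_cons.
      case: (HL p.+1 (2 * n).+2) => j Hj. rewrite Hq in Hj.
      case: (G_dec GM Y j) => j' [i' [Hi' E]]. rewrite E in Hj; clear E.
      case: i' Hi' Hj => [|[|i']] //; last by case: (Y j').
      - move=> _. rewrite drop0. case: (Y j') => /= Hj.
        + by have := lexp0N Hj isT isT.
        + rewrite (G_unf_sh _ _ k.+1) Ek1 /= app_cons (app_cons false [:: true]) in Hj.
          have := lexp0 (lexp_cons Hj) isT. by [].
      - move=> _. rewrite drop1M. case EY: (Y j') => /= Hj.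
        + exists j'.+1. apply: (@lexp_morph GM n (2 * n).+1) => //.
          exact: lexp_cons Hj.
        + by have := lexp0N Hj isT isT.
    * have Hik' : i <= k.
        move: Hik; rewrite leq_eqVlt => /orP [/eqP Ei|] //. by rewrite Ei Ek1 in Hi.
      case: (IH (ex_intro _ i (conj Hik' Hi)) n.+1) => j Hj.
      rewrite (sh_eta k w) (sh_eta j Y) Ek in Hj.
      case EY: (Y j) Hj => Hj.
      - by have := lexp0N Hj isT isT.
      - exists j.+1. exact: lexp_cons Hj.
- have common : forall k, w k = false -> forall n, exists j, lexp n (sh k w) (sh j X).
    move=> k Hk n. exists j1. apply: lexp_lt; by rewrite sh_0.
  elim=> [|k IH] [i [Hik Hi]].
  + move: Hik; rewrite leqn0 => /eqP Ei. apply: common. by rewrite -Ei.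
  + case Ek1: (w k.+1); last exact: common.
    move=> n. case Ek: (w k).
    * have Hik' : i <= k.
        move: Hik; rewrite leq_eqVlt => /orP [/eqP Ei|] //. by rewrite Ei Ek1 in Hi.
      case: (IH (ex_intro _ i (conj Hik' Hi)) n.+1) => j Hj.
      rewrite (sh_eta k w) (sh_eta j X) Ek in Hj.
      case EX: (X j) Hj => Hj.
      - exists j.+1. exact: lexp_cons Hj.
      - by have := lexp0N Hj isT isT.
    * case: (G_suf GM w k) => p Hp.
      have Hq : sh p.+1 (gen_inf GM w) = app [:: true] (gen_inf GM (sh k.+1 w)).
        by rewrite -sh1_sh Hp G_unf_sh Ek sh1_app_cons.
      case: (HH p.+1 (2 * n).+2) => j Hj. rewrite Hq in Hj.
      case: (G_dec GM X j) => j' [i' [Hi' E]]. rewrite E in Hj; clear E.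
      case: i' Hi' Hj => [|[|i']] //; last by case: (X j').
      - move=> _. rewrite drop0. case: (X j') => /= Hj.
        + rewrite (G_unf_sh _ _ k.+1) Ek1 /= !(app_cons true [:: false]) in Hj.
          have := lexp0 (lexp_cons Hj) isT. by [].
        + by have := lexp0N Hj isT isT.
      - move=> _. rewrite drop1M. case EX: (X j') => /= Hj.
        + by have := lexp0N Hj isT isT.
        + exists j'.+1. apply: (@lexp_morph GM n (2 * n).+1) => //.
          exact: lexp_cons Hj.
Qed.

Lemma has_letter g (Z : word) b j : Z j = b -> exists q, gen_inf g Z q = b.
Proof.
move=> Hj. case: (G_suf g Z j) => p Hp.
have [i [Hi Hn]] : exists i, i < size (img g b) /\ nth false (img g b) i = b.
  by case: g {Hp}; case: b {Hj}; [exists 1|exists 0|exists 0|exists 0|exists 0|exists 0].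
exists (p + i). have -> : gen_inf g Z (p + i) = sh p (gen_inf g Z) i by [].
by rewrite Hp G_unf_sh Hj /app Hi.
Qed.

Lemma X_has1 s : exists j, subst_inf s zero_one_bar j.
Proof. elim: s => [|g s [j Hj]]; first by exists 1. exact: has_letter Hj. Qed.
Lemma Y_has0 s : exists j, subst_inf s one_zero_bar j = false.
Proof. elim: s => [|g s [j Hj]]; first by exists 1. exact: has_letter Hj. Qed.

Lemma M01 n : M0 n = odd n /\ M1 n = ~~ odd n.
Proof.
elim/ltn_ind: n => n IH. rewrite M0E M1E /app /=.
case: ifP => Hn; first by case: n {IH} Hn => [|[|n]].
have := IH (n - 2) ltac:(lia). case: n Hn {IH} => [|[|n]] // _.
by rewrite !subSS !subn0 /= negbK.
Qed.
Lemma sh1_M1 : sh 1 M1 = M0.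
Proof. apply: functional_extensionality => n. rewrite /sh. case: (M01 n) => -> _.
by case: (M01 (1 + n)) => _ ->; rewrite /= negbK. Qed.

Lemma key g (X Y u : word) : (exists j, X j) -> (exists j, Y j = false) ->
  Lo (gen_inf g Y) u -> Hi (gen_inf g X) u ->
  (g = GM /\ exists k, sh k u = gen_inf GM zero_bar) \/
  exists m w, sh m u = gen_inf g w /\ Lo Y w /\ Hi X w.
Proof.
move=> HX HY HL HH. case: g HL HH => HL HH.
- case: (parse_L HH) => r [w Hr]. right. exists r, w. split=> //.
  apply: bounds_L => //; rewrite -Hr; [exact: Lo_sh|exact: Hi_sh].
- case: (parse_M HL HH) => r [w Hr].
  have HL' := Lo_sh r HL. have HH' := Hi_sh r HH. rewrite Hr in HL' HH'.
  case: (classic (forall i, w i = false)) => [Hw0|Hw0].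
    left; split=> //. exists r. rewrite Hr. congr gen_inf. exact: functional_extensionality.
  case: (classic (forall i, w i = true)) => [Hw1|Hw1].
    left; split=> //. exists r.+1. rewrite -sh1_sh Hr.
    have -> : w = one_bar by apply: functional_extensionality.
    exact: sh1_M1.
  have [i1 Hi1] : exists i, w i = true.
    apply: NNPP => Hn. apply: Hw0 => i. apply: negbTE. apply/negP => Hi. apply: Hn. by exists i.
  have [i0 Hi0] : exists i, w i = false.
    apply: NNPP => Hn. apply: Hw1 => i. apply: contraT => /negbTE Hi. case: Hn. by exists i.
  have [C D] := bounds_M HX HY HL' HH'.
  set m := maxn i0 i1.
  case: (G_suf GM w m) => p Hp.
  right. exists (r + p), (sh m w). split; first by rewrite -sh_sh Hr Hp.
  split=> k n; rewrite sh_sh.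
  + apply: C. exists i1. split=> //. apply: leq_trans (leq_maxr i0 i1) (leq_addr _ _).
  + apply: D. exists i0. split=> //. apply: leq_trans (leq_maxl i0 i1) (leq_addr _ _).
- case: (parse_R HL) => w Hu. rewrite Hu in HL HH.
  have [HLw HHw] := bounds_R HL HH.
  case: (G_suf GR w 1) => p Hp.
  right. exists p, (sh 1 w). split; first by rewrite Hu.
  split=> //. exact: Lo_sh.
Qed.

Lemma main s : forall u, Lo (subst_inf s one_zero_bar) u -> Hi (subst_inf s zero_one_bar) u ->
 (exists k v, sh k u = subst_inf s v) \/
 (exists k s0 t, morph_eq s (rcons s0 GM ++ t) /\ sh k u = subst_inf (rcons s0 GM) zero_bar).
Proof.
elim: s => [|g s IH] u HL HH.
- left. exists 0, u. by rewrite sh0.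
- case: (key (X_has1 s) (Y_has0 s) HL HH) => [[Eg [k Hk]]|[m [w [Hm [Lw Hw]]]]].
  + right. exists k, [::], s. subst g. by split.
  + case: (IH w Lw Hw) => [[k [v Hv]]|[k [s0 [t [Hmor Hk]]]]]; case: (G_suf g w k) => p Hp.
    * left. exists (m + p), v. by rewrite -sh_sh Hm Hp Hv.
    * right. exists (m + p), (g :: s0), t. split.
      -- move=> x /=. by rewrite Hmor.
      -- by rewrite -sh_sh Hm Hp Hk.
Qed.

Theorem lemma2p6 (u : word) (s : seq gen) :
  lex_le (inf_word (subst_inf s one_zero_bar)) (inf_word u) ->
  lex_le (sup_word u) (sup_word (subst_inf s zero_one_bar)) ->
  (exists (k : nat) (v : word), forall n, u (k + n) = subst_inf s v n) \/
  (exists (k : nat) (s0 t : seq gen),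
      morph_eq s (rcons s0 GM ++ t) /\
      forall n, u (k + n) = subst_inf (rcons s0 GM) zero_bar n).
Proof.
move=> H1 H2.
case: (main (Lo_of H1) (Hi_of H2)) => [[k [v Hv]]|[k [s0 [t [Hm Hk]]]]].
- left. exists k, v => n. by rewrite -Hv.
- right. exists k, s0, t. split=> // n. by rewrite -Hk.
Qed.
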